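(* Let $H$ be a Kekul\'ean hexagonal system and $n\ge0$. The map $f$ from the set of Clar covers of $H$ with exactly $n$ hexagons to the set of induced subgraphs of $R(H)$ isomorphic to $Q_n$ is injective.
   Context: A hexagonal system is a 2-connected finite plane graph in which every interior face is a regular hexagon of side length one; its hexagons are the boundaries of its interior faces; it is Kekul\'ean if it has a perfect matching. A Clar cover of $H$ is a spanning subgraph each of whose components is a hexagon of $H$ or a single edge. The resonance graph $R(H)$ has the perfect matchings of $H$ as vertices, two adjacent iff their symmetric difference is the edge set of a hexagon of $H$. For a Clar cover $C$, $f(C)$ denotes the subgraph of $R(H)$ induced by all perfect matchings $M$ of $H$ such that every hexagon component of $C$ is $M$-alternating and every single-edge component of $C$ belongs to $M$; for $C$ with $n$ hexagons, $f(C)$ is an induced subgraph of $R(H)$ isomorphic to the $n$-cube $Q_n$. *)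

(* Defs.v *)
(* Hexagonal systems are encoded as finite sets of cells of the
   honeycomb lattice, inside an N x N parallelogram box (axial coordinates). *)
From mathcomp Require Import all_boot.
Set Implicit Arguments. Unset Strict Implicit. Unset Printing Implicit Defensive.

Section Hex.
Variable N : nat.

(* Cells (hexagons) of the honeycomb: points (a,b) of the triangular lattice. *)
Definition cell := ('I_N * 'I_N)%type.
(* Vertices of the honeycomb: triangles of the triangular lattice.
   (a,b,true)  = up triangle   {(a,b),(a+1,b),(a,b+1)}
   (a,b,false) = down triangle {(a+1,b),(a,b+1),(a+1,b+1)} *)
Definition vert := ('I_N * 'I_N * bool)%type.
Definition edge := {set vert}.

Definition opred (i : 'I_N) : 'I_N :=
  Ordinal (leq_ltn_trans (leq_pred i) (ltn_ord i)).

(* the six vertices of cell (a,b), in cyclic order around the hexagon *)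
Definition hexverts (c : cell) : seq vert :=
  let a := c.1 in let b := c.2 in
  [:: (a, b, true); (opred a, b, false); (opred a, b, true);
      (opred a, opred b, false); (a, opred b, true); (a, opred b, false)].

Definition hexvset (c : cell) : {set vert} := [set v in hexverts c].

Definition hexedge (c : cell) (i : 'I_6) : edge :=
  [set nth (c.1, c.2, true) (hexverts c) i;
       nth (c.1, c.2, true) (hexverts c) (ordS i)].

Definition hexedges (c : cell) : {set edge} := [set hexedge c i | i : 'I_6].

Definition cadj (c d : cell) : bool :=
  let a := val c.1 in let b := val c.2 in
  let a' := val d.1 in let b' := val d.2 in
  [|| (a' == a.+1) && (b' == b), (a == a'.+1) && (b == b'),
      (a' == a) && (b' == b.+1), (a == a') && (b == b'.+1),
      (a' == a.+1) && (b == b'.+1) | (a == a'.+1) && (b' == b.+1)].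

Definition boundary (c : cell) : bool :=
  [|| val c.1 == 0, val c.2 == 0, val c.1 == N.-1 | val c.2 == N.-1].

Definition interior (c : cell) : bool := ~~ boundary c.

Definition Hverts (S : {set cell}) : {set vert} := \bigcup_(c in S) hexvset c.
Definition Hedges (S : {set cell}) : {set edge} := \bigcup_(c in S) hexedges c.
Definition hadj (S : {set cell}) : rel vert :=
  fun u v => (u != v) && ([set u; v] \in Hedges S).

Definition connected_on (W : {set vert}) (e : rel vert) : bool :=
  [forall u in W, forall v in W,
     connect (fun x y => [&& x \in W, y \in W & e x y]) u v].

Definition two_connected (S : {set cell}) : bool :=
  [&& 2 < #|Hverts S|, connected_on (Hverts S) (hadj S) &
      [forall w in Hverts S, connected_on (Hverts S :\ w) (hadj S)]].

(* Every bounded face of H(S) is a lattice hexagon and the hexagons of H are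
   exactly the cells of S:
   - closedness: an (interior) cell whose six edges all lie in H(S) bounds a
     face of H(S), hence is one of the hexagons of H;
   - no holes: every cell not in S lies in the unbounded face, i.e. is
     connected through cells not in S to the boundary of the box. *)
Definition hex_closed (S : {set cell}) : Prop :=
  forall c : cell, interior c -> hexedges c \subset Hedges S -> c \in S.

Definition no_holes (S : {set cell}) : Prop :=
  forall c : cell, c \notin S ->
    exists2 d : cell, boundary d &
      connect (fun x y => [&& x \notin S, y \notin S & cadj x y]) c d.

Definition hex_system (S : {set cell}) : Prop :=
  [/\ {in S, forall c, interior c}, two_connected S, hex_closed S & no_holes S].

Definition perfect_matching (S : {set cell}) (M : {set edge}) : bool :=
  (M \subset Hedges S) &&
  [forall v in Hverts S, #|[set e in M | v \in e]| == 1].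

Definition kekulean (S : {set cell}) : Prop :=
  exists M : {set edge}, perfect_matching S M.

Definition alternating (M : {set edge}) (c : cell) : bool :=
  [forall i : 'I_6, (hexedge c i \in M) != (hexedge c (ordS i) \in M)].

(* A Clar cover, given by its hexagon components C.1 and its single-edge
   components C.2: vertex-disjoint, covering every vertex of H. *)
Definition clar_cover (S : {set cell}) (C : {set cell} * {set edge}) : bool :=
  [&& C.1 \subset S, C.2 \subset Hedges S &
      [forall v in Hverts S,
         #|[set h in C.1 | v \in hexvset h]| + #|[set e in C.2 | v \in e]| == 1]].

(* vertex set of the induced subgraph f(C) of the resonance graph R(H) *)
Definition fclar (S : {set cell}) (C : {set cell} * {set edge})
  : {set {set edge}} :=
  [set M | [&& perfect_matching S M, [forall h in C.1, alternating M h]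
              & C.2 \subset M]].

End Hex.

(* Main.v *)
Require Import Defs.
From mathcomp Require Import all_boot zify.
Set Implicit Arguments. Unset Strict Implicit. Unset Printing Implicit Defensive.

Definition xv N (c : cell N) (i : 'I_6) : vert N := nth (c.1,c.2,true) (hexverts c) i.

Lemma hexedgeE N (c : cell N) i : hexedge c i = [set xv c i; xv c (ordS i)].
Proof. by []. Qed.

Lemma hexvsetP N (c : cell N) v : reflect (exists j : 'I_6, v = xv c j) (v \in hexvset c).
Proof.
rewrite inE; apply: (iffP (nthP (c.1,c.2,true))) => [[i hi <-] | [j ->]].
  by exists (Ordinal hi).
by exists j.
Qed.

Lemma xv_in N (c : cell N) j : xv c j \in hexvset c.
Proof. by apply/hexvsetP; exists j. Qed.

Lemma hexedge_sub N (c : cell N) i v : v \in hexedge c i -> v \in hexvset c.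
Proof. by rewrite hexedgeE => /set2P [] ->; apply: xv_in. Qed.

Lemma interior_uniq N (c : cell N) : interior c -> uniq (hexverts c).
Proof.
case: c => a b; rewrite /interior /boundary /= => hi.
have ha : nat_of_ord a != 0 by apply: contra hi => ->.
have hb : nat_of_ord b != 0 by apply: contra hi => ->; rewrite orbT.
have pa : (a.-1 == a) = false by case: (nat_of_ord a) ha => [|k] //= _; rewrite eqn_leq ltnn andbF.
have pa' : (nat_of_ord a == a.-1) = false by rewrite eq_sym.
have pb : (b.-1 == b) = false by case: (nat_of_ord b) hb => [|k] //= _; rewrite eqn_leq ltnn andbF.
have pb' : (nat_of_ord b == b.-1) = false by rewrite eq_sym.
rewrite /= !inE !xpair_eqE -!val_eqE /= ?pa ?pa' ?pb ?pb' ?eqxx /= ?andbF ?andbT ?orbF //.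
Qed.

Lemma xv_inj N (c : cell N) i j : interior c -> xv c i = xv c j -> i = j.
Proof.
move=> /interior_uniq hu /eqP; rewrite /xv nth_uniq //; first by move/eqP/val_inj.
Qed.

Lemma edge_at N (c : cell N) i j : interior c -> xv c j \in hexedge c i ->
  i = j \/ ordS i = j.
Proof.
move=> hi; rewrite hexedgeE => /set2P [] /(xv_inj hi) ->; by [left| right].
Qed.

Lemma alt_at N (M : {set edge N}) c j : alternating M c ->
  (hexedge c j \in M) || (hexedge c (ord_pred j) \in M).
Proof.
move=> /forallP /(_ (ord_pred j)); rewrite ord_predK.
by case: (_ \in M); case: (_ \in M).
Qed.

Lemma xv_in_edge N (c : cell N) j : xv c j \in hexedge c j.
Proof. by rewrite hexedgeE set21. Qed.
Lemma xv_in_edge' N (c : cell N) j : xv c j \in hexedge c (ord_pred j).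
Proof. by rewrite hexedgeE ord_predK set22. Qed.

Lemma hexvset_inj N (c d : cell N) : interior c -> interior d ->
  {subset hexvset c <= hexvset d} -> c = d.
Proof.
case: c => a b; case: d => a0 b0; rewrite /interior /boundary /= => hi hi0 hs.
have ha : nat_of_ord a != 0 by apply: contra hi => ->.
have hb : nat_of_ord b != 0 by apply: contra hi => ->; rewrite orbT.
have ha0 : nat_of_ord a0 != 0 by apply: contra hi0 => ->.
have hb0 : nat_of_ord b0 != 0 by apply: contra hi0 => ->; rewrite orbT.
have h1 := hs _ (xv_in (a,b) ord0).
have h2 := hs _ (xv_in (a,b) (@Ordinal 6 2 isT)).
have h3 := hs _ (xv_in (a,b) (@Ordinal 6 4 isT)).
move: h1 h2 h3; rewrite /xv /= !inE !xpair_eqE -!val_eqE /= => h1 h2 h3.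
rewrite /= ?andbT ?andbF ?orbF ?orFb in h1 h2 h3.
suff [e1 e2] : nat_of_ord a = a0 /\ nat_of_ord b = b0 by congr pair; apply: val_inj.
move: ha hb ha0 hb0 => /negPf ha /negPf hb /negPf ha0 /negPf hb0.
case/or3P: h1 => // /andP [/eqP x1 /eqP y1];
case/or3P: h2 => // /andP [/eqP x2 /eqP y2];
case/or3P: h3 => // /andP [/eqP x3 /eqP y3]; lia.
Qed.

Lemma pm_uniq N (S : {set cell N}) M v e e' : perfect_matching S M -> v \in Hverts S ->
  e \in M -> e' \in M -> v \in e -> v \in e' -> e = e'.
Proof.
move=> /andP[_ /forallP /(_ v) /implyP H] hv he he' hve hve'.
have /cards1P [x hx] := H hv.
have : e \in [set e in M | v \in e] by rewrite inE he hve.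
have : e' \in [set e in M | v \in e] by rewrite inE he' hve'.
by rewrite hx !inE => /eqP -> /eqP ->.
Qed.

Lemma pm_exists N (S : {set cell N}) M v : perfect_matching S M -> v \in Hverts S ->
  exists2 e, e \in M & v \in e.
Proof.
move=> /andP[_ /forallP /(_ v) /implyP H] hv.
have /cards1P [x hx] := H hv.
have : x \in [set e in M | v \in e] by rewrite hx set11.
by rewrite inE => /andP [] ? ?; exists x.
Qed.

Section CC.
Variables (N : nat) (S : {set cell N}) (C : {set cell N} * {set edge N}) (v : vert N).
Hypotheses (hC : clar_cover S C) (hv : v \in Hverts S).

Lemma cc_card : #|[set h in C.1 | v \in hexvset h]| + #|[set e in C.2 | v \in e]| = 1.
Proof.
by case/and3P: hC => _ _ /forallP /(_ v) /implyP /(_ hv) /eqP.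
Qed.

Lemma cc_hex h h' : h \in C.1 -> h' \in C.1 -> v \in hexvset h -> v \in hexvset h' -> h = h'.
Proof.
move=> h1 h2 h3 h4.
have hc := cc_card.
have /card_le1_eqP H : #|[set h in C.1 | v \in hexvset h]| <= 1 by lia.
by apply: H; rewrite inE ?h1 ?h2 ?h3 ?h4.
Qed.

Lemma cc_edge e e' : e \in C.2 -> e' \in C.2 -> v \in e -> v \in e' -> e = e'.
Proof.
move=> h1 h2 h3 h4.
have hc := cc_card.
have /card_le1_eqP H : #|[set e in C.2 | v \in e]| <= 1 by lia.
by apply: H; rewrite inE ?h1 ?h2 ?h3 ?h4.
Qed.

Lemma cc_mix h e : h \in C.1 -> v \in hexvset h -> e \in C.2 -> v \in e -> False.
Proof.
move=> h1 h2 h3 h4; have hc := cc_card.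
have : 0 < #|[set h in C.1 | v \in hexvset h]| by apply/card_gt0P; exists h; rewrite inE h1.
have : 0 < #|[set e in C.2 | v \in e]| by apply/card_gt0P; exists e; rewrite inE h3.
lia.
Qed.

Lemma cc_cover : (exists2 h, h \in C.1 & v \in hexvset h) \/ (exists2 e, e \in C.2 & v \in e).
Proof.
have hc := cc_card.
case: (boolP (0 < #|[set h in C.1 | v \in hexvset h]|)) => [/card_gt0P [h] | h0].
  by rewrite inE => /andP [] ? ?; left; exists h.
have : 0 < #|[set e in C.2 | v \in e]| by lia.
by case/card_gt0P => e; rewrite inE => /andP [] ? ?; right; exists e.
Qed.
End CC.

Lemma hedges_vert N (S : {set cell N}) e : e \in Hedges S ->
  exists c, [/\ c \in S, exists i, e = hexedge c i & forall v, v \in e -> v \in Hverts S].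
Proof.
move=> /bigcupP [c hc] /imsetP [i _ ->]; exists c; split => //; first by exists i.
by move=> v /hexedge_sub hv; apply/bigcupP; exists c.
Qed.

Lemma hvert_in N (S : {set cell N}) c v : c \in S -> v \in hexvset c -> v \in Hverts S.
Proof. by move=> hc hv; apply/bigcupP; exists c. Qed.

Lemma hedge_in N (S : {set cell N}) c i : c \in S -> hexedge c i \in Hedges S.
Proof. by move=> hc; apply/bigcupP; exists c => //; apply/imsetP; exists i. Qed.

Definition flip N (M E : {set edge N}) := (M :\: E) :|: (E :\: M).

Lemma in_flip N (M E : {set edge N}) e : (e \in flip M E) = ((e \in M) != (e \in E)).
Proof. by rewrite !inE; case: (e \in M); case: (e \in E). Qed.

Lemma hexedge_in N (c : cell N) i : hexedge c i \in hexedges c.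
Proof. exact: imset_f. Qed.

Lemma hs_int N (S : {set cell N}) c : hex_system S -> c \in S -> interior c.
Proof. by case=> hI _ _ _; apply: hI. Qed.

Lemma not_in_other N (S : {set cell N}) C h h' i : clar_cover S C ->
  h \in C.1 -> h' \in C.1 -> h' != h -> hexedge h' i \notin hexedges h.
Proof.
move=> hC h1 h'1 neq; apply/negP => /imsetP [k _ ek].
have hsub : C.1 \subset S by case/and3P: hC.
have hv : xv h' i \in Hverts S by apply: (hvert_in (subsetP hsub _ h'1)); apply: xv_in.
have e1 : xv h' i \in hexvset h by apply: (@hexedge_sub _ h k); rewrite -ek xv_in_edge.
by move/eqP: neq; apply; apply: (cc_hex hC hv h'1 h1 (xv_in _ _) e1).
Qed.

Lemma flip_fclar N (S : {set cell N}) C M h : hex_system S -> clar_cover S C ->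
  M \in fclar S C -> h \in C.1 -> flip M (hexedges h) \in fclar S C.
Proof.
move=> hS hC hM h1.
have hsub1 : C.1 \subset S by case/and3P: hC.
have hsub2 : C.2 \subset Hedges S by case/and3P: hC.
have hhS : h \in S := subsetP hsub1 _ h1.
have hint : interior h := hs_int hS hhS.
rewrite inE in hM; case/and3P: hM => hpm /forallP halt hsub.
have halth : alternating M h by have := halt h; rewrite h1.
rewrite inE; apply/and3P; split.
- apply/andP; split.
    apply/subsetP => e; rewrite in_flip.
    case eM: (e \in M); case eE: (e \in hexedges h) => //= _.
      by case/andP: hpm => /subsetP /(_ e eM).
    by case/imsetP: eE => i _ ->; apply: hedge_in.
  apply/forallP => v; apply/implyP => hv.
  case: (boolP (v \in hexvset h)) => hvh.
    case/hexvsetP: hvh => j ->.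
    have F : forall e : edge N, xv h j \in e -> (e \in flip M (hexedges h)) = (e \notin M) && (e \in hexedges h).
      move=> e ve; rewrite in_flip.
      case eM: (e \in M) => /=; last by case: (e \in hexedges h).
      have : (hexedge h j \in M) || (hexedge h (ord_pred j) \in M) by apply: alt_at.
      have hvS : xv h j \in Hverts S by apply: hvert_in hhS (xv_in _ _).
      case/orP => g.
        by rewrite -(pm_uniq hpm hvS g eM (xv_in_edge _ _) ve) hexedge_in.
      by rewrite -(pm_uniq hpm hvS g eM (xv_in_edge' _ _) ve) hexedge_in.
    have G : forall e : edge N, xv h j \in e -> e \in hexedges h -> e = hexedge h j \/ e = hexedge h (ord_pred j).
      move=> e ve /imsetP [i _ ei]; rewrite {}ei in ve *.
      case: (edge_at hint ve) => <-; first by left.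
      by right; rewrite ordSK.
    have A := halth; move/forallP: A => /(_ (ord_pred j)); rewrite ord_predK => A.
    apply/cards1P.
    case jM: (hexedge h j \in M); rewrite jM in A.
      exists (hexedge h (ord_pred j)); apply/setP => e; rewrite inE in_set1.
      apply/idP/eqP => [/andP [ef ve] | ->].
        rewrite (F _ ve) in ef; case/andP: ef => eM eE.
        case: (G _ ve eE) => // ej; by rewrite ej jM in eM.
      rewrite xv_in_edge' andbT (F _ (xv_in_edge' _ _)) hexedge_in andbT.
      by move: A; case: (_ \in M).
    exists (hexedge h j); apply/setP => e; rewrite inE in_set1.
    apply/idP/eqP => [/andP [ef ve] | ->].
      rewrite (F _ ve) in ef; case/andP: ef => eM eE.
      case: (G _ ve eE) => // ej; rewrite ej in eM.
      by move: A eM; case: (_ \in M).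
    by rewrite xv_in_edge andbT (F _ (xv_in_edge _ _)) hexedge_in jM.
  have -> : [set e in flip M (hexedges h) | v \in e] = [set e in M | v \in e].
    apply/setP => e; rewrite !inE.
    case ve: (v \in e); rewrite ?andbF ?andbT //.
    have -> : (e \in hexedges h) = false.
      apply/negP => /imsetP [i _ ei]; rewrite ei in ve.
      by move: hvh; rewrite (hexedge_sub ve).
    by case: (e \in M).
  by case/andP: hpm => _ /forallP /(_ v) /implyP /(_ hv).
- apply/forallP => h'; apply/implyP => h'1.
  have := halt h'; rewrite h'1 /= => /forallP H.
  case: (eqVneq h' h) => [eh|neq].
    rewrite eh in H *; apply/forallP => i; rewrite !in_flip !hexedge_in.
    by move: (H i); case: (_ \in M); case: (_ \in M).
  apply/forallP => i; rewrite !in_flip !(negbTE (not_in_other _ hC h1 h'1 neq)).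
  by rewrite !eqbF_neg !negbK; apply: H.
- apply/subsetP => e he; rewrite in_flip (subsetP hsub e he).
  apply/negP => /imsetP [i _ ei].
  have hvS : xv h i \in Hverts S by apply: hvert_in hhS (xv_in _ _).
  apply: (cc_mix hC hvS h1 (xv_in _ _) he); rewrite ei; apply: xv_in_edge.
Qed.

Lemma cyc2 (i : 'I_6) : ordS (ordS i) != i.
Proof. by case: i => -[|[|[|[|[|[|]]]]]]. Qed.

Lemma par_alt (i : 'I_6) : (~~ odd i) != (~~ odd (ordS i)).
Proof. by case: i => -[|[|[|[|[|[|]]]]]]. Qed.

Lemma iter_ord (j : 'I_6) : j = iter j (@ordS 6) ord0.
Proof. by apply/val_inj; case: j => -[|[|[|[|[|[|]]]]]]. Qed.

Definition evk (j : 'I_6) := if odd j then ord_pred j else j.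

Lemma evk_even j : ~~ odd (evk j).
Proof. by rewrite /evk; case: j => -[|[|[|[|[|[|]]]]]]. Qed.

Lemma evk_uniq (i j : 'I_6) : i = j \/ ordS i = j -> ~~ odd i -> i = evk j.
Proof.
rewrite /evk; case=> <-; first by move/negbTE ->.
by case: i => -[|[|[|[|[|[|]]]]]] //= ? _; apply/val_inj.
Qed.

Lemma evk_at (j : 'I_6) : evk j = j \/ evk j = ord_pred j.
Proof. by rewrite /evk; case: (odd j); [right|left]. Qed.

Lemma hexedge_inj N (c : cell N) i i' : interior c -> hexedge c i = hexedge c i' -> i = i'.
Proof.
move=> hi e.
have h1 : xv c i \in hexedge c i' by rewrite -e xv_in_edge.
have h2 : xv c (ordS i) \in hexedge c i' by rewrite -e hexedgeE set22.
case: (edge_at hi h1) => // e1.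
case: (edge_at hi h2) => [e2|/ordS_inj //].
by move: (cyc2 i'); rewrite e1 e2 eqxx.
Qed.

Lemma alt_edge N (M : {set edge N}) c j : alternating M c ->
  exists2 g, g \in M & (g = hexedge c j \/ g = hexedge c (ord_pred j)).
Proof.
move/(alt_at j); case/orP => g; [exists (hexedge c j) => //; by left | exists (hexedge c (ord_pred j)) => //; by right].
Qed.

Lemma edge_has_v N (c : cell N) j g : g = hexedge c j \/ g = hexedge c (ord_pred j) -> xv c j \in g.
Proof. by case=> ->; [apply: xv_in_edge | apply: xv_in_edge']. Qed.

Definition M0 N (C : {set cell N} * {set edge N}) : {set edge N} :=
  C.2 :|: \bigcup_(h in C.1) [set hexedge h i | i : 'I_6 & ~~ odd i].

Lemma fclar_nonempty N (S : {set cell N}) C : hex_system S -> clar_cover S C ->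
  M0 C \in fclar S C.
Proof.
move=> hS hC.
have hsub1 : C.1 \subset S by case/and3P: hC.
have hsub2 : C.2 \subset Hedges S by case/and3P: hC.
have inM0 : forall e, (e \in M0 C) = ((e \in C.2) || [exists h in C.1, exists i : 'I_6, (~~ odd i) && (e == hexedge h i)]).
  move=> e; rewrite inE; congr orb; apply/bigcupP/existsP => [[h hh /imsetP [i]]|[h /andP [hh /existsP [i /andP [oi /eqP ->]]]]].
    by rewrite inE => oi ->; exists h; rewrite hh; apply/existsP; exists i; rewrite oi eqxx.
  by exists h => //; apply/imsetP; exists i; rewrite ?inE.
rewrite inE; apply/and3P; split.
- apply/andP; split.
    apply/subsetP => e; rewrite inM0; case/orP; first by apply: (subsetP hsub2).
    case/existsP => h /andP [hh /existsP [i /andP [_ /eqP ->]]].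
    by apply: hedge_in; apply: (subsetP hsub1).
  apply/forallP => v; apply/implyP => hv; apply/cards1P.
  case: (cc_cover hC hv) => [[h hh vh] | [e0 he0 ve0]].
    have hint : interior h by apply: (hs_int hS); apply: (subsetP hsub1).
    case/hexvsetP: vh => j ev.
    exists (hexedge h (evk j)); apply/setP => e; rewrite inE in_set1.
    apply/idP/eqP => [/andP [] | ->].
      rewrite inM0; case/orP => [eC ve|].
        by case: (cc_mix hC hv hh _ eC ve); rewrite ev xv_in.
      case/existsP => h' /andP [hh' /existsP [i /andP [oi /eqP ee]]] ve.
      have vh' : v \in hexvset h' by rewrite ee in ve; apply: hexedge_sub ve.
      have eh : h' = h by apply: (cc_hex hC hv hh' hh vh'); rewrite ev xv_in.
      rewrite ee eh; congr hexedge; apply: evk_uniq => //.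
      by apply: (edge_at hint); rewrite -ev -eh -ee.
    rewrite inM0; apply/andP; split.
      apply/orP; right; apply/existsP; exists h; rewrite hh /=.
      by apply/existsP; exists (evk j); rewrite evk_even eqxx.
    by rewrite ev; apply: edge_has_v; case: (evk_at j) => ->; [left|right].
  exists e0; apply/setP => e; rewrite inE in_set1.
  apply/idP/eqP => [/andP [] | ->]; last by rewrite ve0 andbT inM0 he0.
  rewrite inM0; case/orP => [eC ve|]; first by apply: (cc_edge hC hv eC he0).
  case/existsP => h' /andP [hh' /existsP [i /andP [oi /eqP ee]]] ve.
  have vh' : v \in hexvset h' by rewrite ee in ve; apply: hexedge_sub ve.
  by case: (cc_mix hC hv hh' vh' he0 ve0).
- apply/forallP => h; apply/implyP => hh.
  have hint : interior h by apply: (hs_int hS); apply: (subsetP hsub1).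
  have hvS : forall i, xv h i \in Hverts S.
    by move=> i; apply: (hvert_in (subsetP hsub1 _ hh)); apply: xv_in.
  have key : forall i, (hexedge h i \in M0 C) = ~~ odd i.
    move=> i; rewrite inM0.
    have -> : (hexedge h i \in C.2) = false.
      by apply/negP => hC2; apply: (cc_mix hC (hvS i) hh (xv_in _ _) hC2); apply: xv_in_edge.
    apply/existsP/idP => [[h' /andP [hh' /existsP [i' /andP [oi /eqP ee]]]] | oi].
      have vh' : xv h i \in hexvset h' by apply: (@hexedge_sub _ h' i'); rewrite -ee xv_in_edge.
      have eh : h' = h by apply: (cc_hex hC (hvS i) hh' hh vh' (xv_in _ _)).
      by rewrite eh in ee; rewrite (hexedge_inj hint ee).
    by exists h; rewrite hh /=; apply/existsP; exists i; rewrite oi eqxx.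
  by apply/forallP => i; rewrite !key par_alt.
- by apply/subsetP => e he; rewrite inM0 he.
Qed.

Lemma fclarP N (S : {set cell N}) C M : M \in fclar S C ->
  [/\ perfect_matching S M, forall h, h \in C.1 -> alternating M h & C.2 \subset M].
Proof.
rewrite inE => /and3P [a /forallP b c]; split => // h hh.
by have := b h; rewrite hh.
Qed.

Lemma sub1 N (S : {set cell N}) C C' : hex_system S -> clar_cover S C -> clar_cover S C' ->
  fclar S C = fclar S C' -> C.1 \subset C'.1.
Proof.
move=> hS hC hC' hf.
have hsub1 : C.1 \subset S by case/and3P: hC.
have hsub1' : C'.1 \subset S by case/and3P: hC'.
apply/subsetP => h hh.
have hhS := subsetP hsub1 _ hh.
have hint : interior h := hs_int hS hhS.
have hvS : forall i, xv h i \in Hverts S by move=> i; apply: (hvert_in hhS); apply: xv_in.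
set M := M0 C.
have hM : M \in fclar S C by apply: fclar_nonempty.
set M' := flip M (hexedges h).
have hM' : M' \in fclar S C by apply: flip_fclar.
have [pm alt _] := fclarP hM.
have [pm' alt' _] := fclarP hM'.
have [_ altC sC] : [/\ perfect_matching S M, forall h, h \in C'.1 -> alternating M h & C'.2 \subset M].
  by apply: fclarP; rewrite -hf.
have [_ altC' sC'] : [/\ perfect_matching S M', forall h, h \in C'.1 -> alternating M' h & C'.2 \subset M'].
  by apply: fclarP; rewrite -hf.
have noedge : forall j e, e \in C'.2 -> xv h j \in e -> False.
  move=> j e he ve.
  have [g gM gj] := alt_edge j (alt h hh).
  have eg : g = e := pm_uniq pm (hvS j) gM (subsetP sC _ he) (edge_has_v gj) ve.
  have gE : g \in hexedges h by case: gj => ->; apply: hexedge_in.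
  have := subsetP sC' _ he; rewrite in_flip -eg gM gE //.
have step : forall j h', h' \in C'.1 -> xv h j \in hexvset h' -> xv h (ordS j) \in hexvset h'.
  move=> j h' hh' vh'.
  case/hexvsetP: (vh') => j' ej'.
  have [g gM gj] := alt_edge j (alt h hh).
  have [g' gM' gj'] := alt_edge j (alt' h hh).
  have [g1 g1M g1j] := alt_edge j' (altC h' hh').
  have [g1' g1M' g1j'] := alt_edge j' (altC' h' hh').
  have e1 : g = g1 by apply: (pm_uniq pm (hvS j) gM g1M (edge_has_v gj)); rewrite ej'; apply: edge_has_v.
  have e2 : g' = g1' by apply: (pm_uniq pm' (hvS j) gM' g1M' (edge_has_v gj')); rewrite ej'; apply: edge_has_v.
  have gE1 : g \in hexedges h' by rewrite e1; case: g1j => ->; apply: hexedge_in.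
  have gE1' : g' \in hexedges h' by rewrite e2; case: g1j' => ->; apply: hexedge_in.
  have gg : g != g'.
    apply/eqP => eg; move: gM'; rewrite -eg /M' in_flip gM.
    by case: gj => ->; rewrite hexedge_in.
  have jE : hexedge h j \in hexedges h'.
    case: gj => [<- //|gp].
    case: gj' => [<- //|gp']; by move: gg; rewrite gp gp' eqxx.
  case/imsetP: jE => k _ ek.
  by apply: (@hexedge_sub _ h' k); rewrite -ek hexedgeE set22.
case: (cc_cover hC' (hvS ord0)) => [[h0 hh0 v0] | [e he ve]]; last by case: (noedge _ _ he ve).
have allv : forall n, xv h (iter n (@ordS 6) ord0) \in hexvset h0.
  by elim=> [|n IH] //=; apply: step.
have -> : h = h0.
  apply: hexvset_inj => //; first by apply: (hs_int hS); apply: (subsetP hsub1').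
  by move=> v /hexvsetP [j ->]; rewrite (iter_ord j).
by [].
Qed.

Lemma sub2 N (S : {set cell N}) C C' : hex_system S -> clar_cover S C -> clar_cover S C' ->
  fclar S C = fclar S C' -> C.1 = C'.1 -> C.2 \subset C'.2.
Proof.
move=> hS hC hC' hf e1.
have hsub2 : C.2 \subset Hedges S by case/and3P: hC.
have hM : M0 C \in fclar S C by apply: fclar_nonempty.
have [pm _ sC] := fclarP hM.
have [_ _ sC'] : [/\ perfect_matching S (M0 C), forall h, h \in C'.1 -> alternating (M0 C) h & C'.2 \subset M0 C].
  by apply: fclarP; rewrite -hf.
apply/subsetP => e he.
have [c [hc [i ei] hv]] := hedges_vert (subsetP hsub2 _ he).
have ve : xv c i \in e by rewrite ei xv_in_edge.
have hvS := hv _ ve.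
case: (cc_cover hC' hvS) => [[h' hh' vh'] | [e' he' ve']].
  by rewrite -e1 in hh'; case: (cc_mix hC hvS hh' vh' he ve).
by rewrite (pm_uniq pm hvS (subsetP sC _ he) (subsetP sC' _ he') ve ve').
Qed.

Theorem lemma2 (N n : nat) (S : {set cell N}) :
  hex_system S -> kekulean S ->
  forall C C' : {set cell N} * {set edge N},
    clar_cover S C -> clar_cover S C' ->
    #|C.1| = n -> #|C'.1| = n ->
    fclar S C = fclar S C' -> C = C'.
Proof.
move=> hS _ C C' hC hC' _ _ hf.
have e1 : C.1 = C'.1 by apply/eqP; rewrite eqEsubset !(sub1 hS) //.
have e2 : C.2 = C'.2.
  by apply/eqP; rewrite eqEsubset (sub2 hS hC hC') // (sub2 hS hC' hC).
by case: C C' hC hC' hf e1 e2 => [A B] [A' B'] /= _ _ _ -> ->.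
Qed.
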